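(* The associated metric $\tilde g$ is Killing (i.e. $\tilde g([x,y],z)=\tilde g(x,[y,z])$ for all $x,y,z\in\mathfrak l$) if and only if $(L,\varphi,\xi,\eta,g)$ belongs to $\mathcal{F}_8\oplus\mathcal{F}_9\oplus\mathcal{F}_{10}$ with $2\lambda=\mu=\nu$, where $\lambda=F_{101}$, $\mu=F_{102}$, $\nu=F_{011}$. Equivalently, $\tilde g$ is Killing iff $C_{12}^0=-C_{01}^1=C_{02}^2$ and all other $C_{ij}^k$ ($i<j$) vanish.
   Context: Let $L$ be a 3-dimensional real connected Lie group with Lie algebra $\mathfrak l$, and let $\{E_0,E_1,E_2\}$ be a basis of left-invariant vector fields, with $[E_i,E_j]=C_{ij}^kE_k$. Define the left-invariant almost contact structure $(\varphi,\xi,\eta)$ by $\varphi E_0=0$, $\varphi E_1=E_2$, $\varphi E_2=-E_1$, $\xi=E_0$, $\eta(E_0)=1$, $\eta(E_1)=\eta(E_2)=0$, and the left-invariant pseudo-Riemannian metric $g$ by $g(E_0,E_0)=g(E_1,E_1)=-g(E_2,E_2)=1$, $g(E_i,E_j)=0$ for $i\neq j$. The associated metric is $\tilde g(x,y)=g(x,\varphi y)+\eta(x)\eta(y)$. Let $\nabla$ be the Levi-Civita connection of $g$, $F(x,y,z)=g((\nabla_x\varphi)y,z)$, and $F_{ijk}=F(E_i,E_j,E_k)$. The manifold belongs to $\mathcal{F}_8\oplus\mathcal{F}_9\oplus\mathcal{F}_{10}$ iff all $F_{ijk}$ vanish except possibly $F_{101}=F_{110}=F_{202}=F_{220}=:\lambda$,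 $F_{102}=F_{120}=-F_{201}=-F_{210}=:\mu$, and $F_{011}=F_{022}=:\nu$ (these are respectively the $\mathcal{F}_8$, $\mathcal{F}_9$, $\mathcal{F}_{10}$ parts). *)

(* Defs.v *)
From Stdlib Require Import Reals Lra.
Open Scope R_scope.

(* Indices of the left-invariant frame {E_0, E_1, E_2}. *)
Inductive idx : Type := I0 | I1 | I2.

(* A left-invariant vector field = its constant coordinates in {E_0,E_1,E_2}. *)
Definition vec := idx -> R.

Definition sum3 (f : idx -> R) : R := f I0 + f I1 + f I2.

Definition idx_eqb (i j : idx) : bool :=
  match i, j with
  | I0, I0 | I1, I1 | I2, I2 => true
  | _, _ => false
  end.

Definition basis (i : idx) : vec := fun k => if idx_eqb i k then 1 else 0.

Definition vsub (x y : vec) : vec := fun k => x k - y k.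

(* Structure constants: C i j k = C_{ij}^k, i.e. [E_i,E_j] = sum_k C_{ij}^k E_k. *)
Definition structconst := idx -> idx -> idx -> R.

Definition bracket (C : structconst) (x y : vec) : vec :=
  fun k => sum3 (fun i => sum3 (fun j => x i * y j * C i j k)).

Definition is_lie_algebra (C : structconst) : Prop :=
  (forall i j k, C i j k = - C j i k) /\
  (forall i j k m,
      sum3 (fun l => C i j l * C l k m + C j k l * C l i m + C k i l * C l j m) = 0).

Definition phi (x : vec) : vec :=
  fun k => match k with I0 => 0 | I1 => - x I2 | I2 => x I1 end.
Definition eta (x : vec) : R := x I0.
Definition xi : vec := basis I0.

Definition gm (x y : vec) : R := x I0 * y I0 + x I1 * y I1 - x I2 * y I2.

Definition gt (x y : vec) : R := gm x (phi y) + eta x * eta y.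

Definition killing (C : structconst) : Prop :=
  forall x y z : vec, gt (bracket C x y) z = gt x (bracket C y z).

(* A connection on left-invariant fields, given by nab i j = nabla_{E_i} E_j,
   extended bilinearly. *)
Definition connection := idx -> idx -> vec.

Definition nabla (nab : connection) (x y : vec) : vec :=
  fun k => sum3 (fun i => sum3 (fun j => x i * y j * nab i j k)).

(* Levi-Civita connection of g on left-invariant fields: torsion-free and
   metric (g(E_j,E_k) is constant, so E_i(g(E_j,E_k)) = 0). *)
Definition is_levi_civita (C : structconst) (nab : connection) : Prop :=
  (forall i j, forall k, nab i j k - nab j i k = C i j k) /\
  (forall i j k, gm (nab i j) (basis k) + gm (basis j) (nab i k) = 0).

(* F(x,y,z) = g((nabla_x phi) y, z), (nabla_x phi) y = nabla_x (phi y) - phi (nabla_x y). *)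
Definition Ften (nab : connection) (x y z : vec) : R :=
  gm (vsub (nabla nab x (phi y)) (phi (nabla nab x y))) z.

Definition Fcomp (nab : connection) (i j k : idx) : R :=
  Ften nab (basis i) (basis j) (basis k).

Definition F_lambda (F : idx -> idx -> idx -> R) : R := F I1 I0 I1.
Definition F_mu (F : idx -> idx -> idx -> R) : R := F I1 I0 I2.
Definition F_nu (F : idx -> idx -> idx -> R) : R := F I0 I1 I1.

Definition F8910_pattern (l m n : R) (i j k : idx) : R :=
  match i, j, k with
  | I1, I0, I1 | I1, I1, I0 | I2, I0, I2 | I2, I2, I0 => l
  | I1, I0, I2 | I1, I2, I0 => m
  | I2, I0, I1 | I2, I1, I0 => - m
  | I0, I1, I1 | I0, I2, I2 => n
  | _, _, _ => 0
  end.

Definition in_F8_F9_F10 (F : idx -> idx -> idx -> R) : Prop :=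
  exists l m n, forall i j k, F i j k = F8910_pattern l m n i j k.

Definition killing_struct_cond (C : structconst) : Prop :=
  C I1 I2 I0 = - C I0 I1 I1 /\ - C I0 I1 I1 = C I0 I2 I2 /\
  C I0 I1 I0 = 0 /\ C I0 I1 I2 = 0 /\
  C I0 I2 I0 = 0 /\ C I0 I2 I1 = 0 /\
  C I1 I2 I1 = 0 /\ C I1 I2 I2 = 0.

(* Main.v *)
Require Import Defs.
From Stdlib Require Import Reals Lra FunctionalExtensionality.
Open Scope R_scope.

Definition Cmk (a0 a1 a2 b0 b1 b2 c0 c1 c2 : R) : structconst :=
  fun i j k =>
    let v := fun (u0 u1 u2 : R) => match k with I0 => u0 | I1 => u1 | I2 => u2 end in
    match i, j with
    | I0, I1 => v a0 a1 a2 | I1, I0 => v (-a0) (-a1) (-a2)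
    | I0, I2 => v b0 b1 b2 | I2, I0 => v (-b0) (-b1) (-b2)
    | I1, I2 => v c0 c1 c2 | I2, I1 => v (-c0) (-c1) (-c2)
    | _, _ => 0
    end.

Definition gd (k : idx) : R := match k with I2 => -1 | _ => 1 end.
Definition Cl (C : structconst) i j k := C i j k * gd k.
Definition nabK (C : structconst) : connection :=
  fun i j k => gd k * (/2 * (Cl C i j k - Cl C j k i + Cl C k i j)).

Lemma C_form C : is_lie_algebra C ->
  C = Cmk (C I0 I1 I0) (C I0 I1 I1) (C I0 I1 I2) (C I0 I2 I0) (C I0 I2 I1)
          (C I0 I2 I2) (C I1 I2 I0) (C I1 I2 I1) (C I1 I2 I2).
Proof.
  intros [A _].
  apply functional_extensionality; intro i;
  apply functional_extensionality; intro j;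
  apply functional_extensionality; intro k.
  destruct i, j, k; unfold Cmk; simpl;
  try reflexivity;
  match goal with |- C ?i ?j ?k = _ => pose proof (A i j k) end; lra.
Qed.

Lemma nab_form C nab : is_levi_civita C nab -> nab = nabK C.
Proof.
  intros [T M].
  apply functional_extensionality; intro i;
  apply functional_extensionality; intro j;
  apply functional_extensionality; intro k.
  assert (M' : forall i j k, nab i j k * gd k + nab i k j * gd j = 0).
  { intros a b c; specialize (M a b c); unfold gm, basis in M;
    destruct b, c; simpl in M |- *; lra. }
  unfold nabK, Cl.
  pose proof (T i j k); pose proof (T j k i); pose proof (T k i j).
  pose proof (M' i j k); pose proof (M' j k i); pose proof (M' k i j).
  pose proof (M' i k j); pose proof (M' j i k); pose proof (M' k j i).
  destruct i, j, k; simpl in *; lra.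
Qed.

Theorem theorem2p3 :
  forall (C : structconst) (nab : connection),
    is_lie_algebra C ->
    is_levi_civita C nab ->
    (killing C <->
       (in_F8_F9_F10 (Fcomp nab) /\
        2 * F_lambda (Fcomp nab) = F_mu (Fcomp nab) /\
        F_mu (Fcomp nab) = F_nu (Fcomp nab))) /\
    (killing C <-> killing_struct_cond C).
Proof.
  intros C nab HL HC.
  pose proof (nab_form C nab HC) as E. subst nab.
  rewrite (C_form C HL).
  generalize (C I0 I1 I0) (C I0 I1 I1) (C I0 I1 I2) (C I0 I2 I0) (C I0 I2 I1)
          (C I0 I2 I2) (C I1 I2 I0) (C I1 I2 I1) (C I1 I2 I2).
  clear.
  intros a0 a1 a2 b0 b1 b2 c0 c1 c2.
  assert (KS : killing (Cmk a0 a1 a2 b0 b1 b2 c0 c1 c2) <->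
               killing_struct_cond (Cmk a0 a1 a2 b0 b1 b2 c0 c1 c2)).
  { unfold killing, killing_struct_cond; simpl; split.
    - intro K.
      pose (e := basis).
      pose proof (K (e I0) (e I1) (e I0)) as k1.
      pose proof (K (e I0) (e I1) (e I1)) as k2.
      pose proof (K (e I0) (e I1) (e I2)) as k3.
      pose proof (K (e I0) (e I2) (e I0)) as k4.
      pose proof (K (e I0) (e I2) (e I1)) as k5.
      pose proof (K (e I0) (e I2) (e I2)) as k6.
      pose proof (K (e I1) (e I2) (e I0)) as k7.
      pose proof (K (e I1) (e I2) (e I1)) as k8.
      pose proof (K (e I1) (e I2) (e I2)) as k9.
      pose proof (K (e I1) (e I0) (e I1)) as k10.
      pose proof (K (e I2) (e I0) (e I2)) as k11.
      pose proof (K (e I2) (e I0) (e I1)) as k12.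
      pose proof (K (e I1) (e I0) (e I2)) as k13.
      pose proof (K (e I2) (e I1) (e I2)) as k14.
      pose proof (K (e I1) (e I2) (e I1)) as k15.
      pose proof (K (e I2) (e I1) (e I1)) as k16.
      pose proof (K (e I0) (e I0) (e I1)) as k17.
      pose proof (K (e I1) (e I1) (e I2)) as k18.
      unfold e, gt, gm, phi, eta, bracket, sum3, basis, Cmk in *; simpl in *.
      repeat split; lra.
    - intros (h1 & h2 & h3 & h4 & h5 & h6 & h7 & h8).
      assert (a1 = - c0) by lra. assert (b2 = c0) by lra.
      subst. intros x y z.
      unfold gt, gm, phi, eta, bracket, sum3, Cmk; simpl. ring. }
  split; [| exact KS].
  rewrite KS. unfold killing_struct_cond, in_F8_F9_F10, F_lambda, F_mu, F_nu; simpl.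
  split.
  - intros (h1 & h2 & h3 & h4 & h5 & h6 & h7 & h8).
    assert (a1 = - c0) by lra. assert (b2 = c0) by lra. subst.
    split; [| unfold Fcomp, Ften, gm, vsub, nabla, phi, sum3, basis, nabK, Cl, gd, Cmk;
              simpl; split; lra].
    match goal with |- exists l m n, forall i j k, Fcomp ?N _ _ _ = _ =>
      exists (Fcomp N I1 I0 I1), (Fcomp N I1 I0 I2), (Fcomp N I0 I1 I1) end.
    intros i j k.
    destruct i, j, k;
    unfold F8910_pattern, Fcomp, Ften, gm, vsub, nabla, phi, sum3, basis, nabK, Cl, gd, Cmk;
    simpl; lra.
  - intros ([l [m [n H]]] & e1 & e2).
    pose proof (H I0 I0 I0). pose proof (H I0 I0 I1). pose proof (H I0 I0 I2).
    pose proof (H I0 I1 I0). pose proof (H I0 I1 I1). pose proof (H I0 I1 I2).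
    pose proof (H I0 I2 I0). pose proof (H I0 I2 I1). pose proof (H I0 I2 I2).
    pose proof (H I1 I0 I0). pose proof (H I1 I0 I1). pose proof (H I1 I0 I2).
    pose proof (H I1 I1 I0). pose proof (H I1 I1 I1). pose proof (H I1 I1 I2).
    pose proof (H I1 I2 I0). pose proof (H I1 I2 I1). pose proof (H I1 I2 I2).
    pose proof (H I2 I0 I0). pose proof (H I2 I0 I1). pose proof (H I2 I0 I2).
    pose proof (H I2 I1 I0). pose proof (H I2 I1 I1). pose proof (H I2 I1 I2).
    pose proof (H I2 I2 I0). pose proof (H I2 I2 I1). pose proof (H I2 I2 I2).
    clear H.
    unfold F8910_pattern, Fcomp, Ften, gm, vsub, nabla, phi, sum3, basis, nabK, Cl, gd, Cmk
      in *; simpl in *.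
    repeat split; lra.
Qed.
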